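(* Let $q\in[1,\infty)$ and let $(X,d_X)$ be a $q$-barycentric metric space that contains a geodesic segment (an isometric copy of a nondegenerate interval of $\mathbb{R}$). Then $q\ge2$.
   Context: For $q\in[1,\infty)$, $\beta>0$, a metric space $(X,d_X)$ is $q$-barycentric with constant $\beta$ if there is a map $\mathfrak{B}$ from finitely supported probability measures on $X$ to $X$, with $\mathfrak{B}(\delta_x)=x$, such that $d_X(\mathfrak{B}(\mu),x)^q+\beta^{-q}\int_X d_X(\mathfrak{B}(\mu),y)^q\,d\mu(y)\le\int_X d_X(x,y)^q\,d\mu(y)$ for all $x\in X$ and finitely supported probability measures $\mu$; $q$-barycentric means this holds for some $\beta$. *)

(* Defs.v *)
From Stdlib Require Import Reals Lra List.
Import ListNotations.
Open Scope R_scope.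

Definition rpow (t q : R) : R :=
  if Req_EM_T t 0 then 0 else Rpower t q.

Definition is_metric {X : Type} (d : X -> X -> R) : Prop :=
  (forall x y, 0 <= d x y) /\
  (forall x y, d x y = 0 <-> x = y) /\
  (forall x y, d x y = d y x) /\
  (forall x y z, d x z <= d x y + d y z).

Definition sum_list {X : Type} (f : X -> R) (s : list X) : R :=
  fold_right (fun x acc => f x + acc) 0 s.

(* mu : X -> R is a finitely supported probability measure (given by its point
   masses), and s is a duplicate-free list containing its support.  Integrals
   against mu are sums over s. *)
Definition fs_prob_on {X : Type} (mu : X -> R) (s : list X) : Prop :=
  NoDup s /\
  (forall x, mu x <> 0 -> In x s) /\
  (forall x, 0 <= mu x) /\
  sum_list mu s = 1.

Definition is_fs_prob {X : Type} (mu : X -> R) : Prop :=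
  exists s, fs_prob_on mu s.

Definition is_dirac {X : Type} (x : X) (mu : X -> R) : Prop :=
  mu x = 1 /\ forall y, y <> x -> mu y = 0.

Definition q_barycentric_with {X : Type} (d : X -> X -> R) (q beta : R)
    (B : (X -> R) -> X) : Prop :=
  (forall x mu, is_dirac x mu -> B mu = x) /\
  (forall (mu : X -> R) (s : list X) (x : X), fs_prob_on mu s ->
     rpow (d (B mu) x) q
     + / rpow beta q * sum_list (fun y => mu y * rpow (d (B mu) y) q) s
     <= sum_list (fun y => mu y * rpow (d x y) q) s).

Definition q_barycentric {X : Type} (d : X -> X -> R) (q : R) : Prop :=
  exists beta, 0 < beta /\ exists B, q_barycentric_with d q beta B.

Definition has_geodesic_segment {X : Type} (d : X -> X -> R) : Prop :=
  exists (a b : R) (f : R -> X), a < b /\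
    forall s t, a <= s <= b -> a <= t <= b -> d (f s) (f t) = Rabs (s - t).

(* Main.v *)
Require Import Defs.
From Stdlib Require Import Reals Lra List ClassicalDescription.
Import ListNotations.
Open Scope R_scope.
Lemma exp_conv (r l : R) : 0 <= r <= 1 -> exp (r*l) <= 1 - r + r * exp l.
Proof.
  intros Hr.
  set (g := fun x => 1 - r + r * exp x - exp (r*x)).
  set (g' := fun x => r * exp x - r * exp (r*x)).
  assert (Hd : forall c, derivable_pt_lim g c (g' c)).
  { intro c. unfold g, g'.
    replace (r * exp c - r * exp (r * c)) with
      (0 + (0 * exp c + r * exp c) - (r * exp (r*c))) by ring.
    apply derivable_pt_lim_minus.
    - apply derivable_pt_lim_plus.
      + apply derivable_pt_lim_const.
      + apply (derivable_pt_lim_mult (fun _ => r) exp).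
        * apply derivable_pt_lim_const.
        * apply derivable_pt_lim_exp.
    - replace (r * exp (r*c)) with (exp (r*c) * r) by ring.
      apply (derivable_pt_lim_comp (fun x => r * x) exp).
      + assert (H1 := derivable_pt_lim_scal id r c 1 (derivable_pt_lim_id c)).
        rewrite Rmult_1_r in H1. exact H1.
      + apply derivable_pt_lim_exp. }
  assert (g 0 = 0) as G0.
  { unfold g. rewrite Rmult_0_r, exp_0. ring. }
  enough (0 <= g l) by (unfold g in H; lra).
  destruct (Rtotal_order l 0) as [Hl|[Hl|Hl]].
  - destruct (MVT_cor2 g g' l 0 Hl (fun c _ => Hd c)) as [c [Hc1 Hc2]].
    assert (g' c <= 0).
    { unfold g'. assert (exp c <= exp (r*c)).
      { apply exp_le_3 || idtac. destruct (Req_dec c (r*c)) as [E|E].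
        rewrite <- E; lra. left; apply exp_increasing. nra. }
      nra. }
    nra.
  - subst; lra.
  - destruct (MVT_cor2 g g' 0 l Hl (fun c _ => Hd c)) as [c [Hc1 Hc2]].
    assert (0 <= g' c).
    { unfold g'. assert (exp (r*c) <= exp c).
      { destruct (Req_dec c (r*c)) as [E|E].
        rewrite <- E; lra. left; apply exp_increasing. nra. }
      nra. }
    nra.
Qed.
Lemma bern_conc y r : 0 < y -> 0 <= r <= 1 -> Rpower y r <= 1 + r*(y-1).
Proof. intros Hy Hr. unfold Rpower. pose proof (exp_conv r (ln y) Hr).
  rewrite exp_ln in H by lra. lra. Qed.

Lemma bern_conv y r : 0 < y -> 1 <= r -> 1 + r*(y-1) <= Rpower y r.
Proof. intros Hy Hr. set (z := Rpower y r).
  assert (Hz : 0 < z) by (unfold z, Rpower; apply exp_pos).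
  assert (E : Rpower z (/r) = y).
  { unfold z. rewrite Rpower_mult. rewrite Rinv_r by lra. apply Rpower_1; auto. }
  assert (0 < /r <= 1).
  { split. apply Rinv_0_lt_compat; lra. rewrite <- Rinv_1. apply Rinv_le_contravar; lra. }
  pose proof (bern_conc z (/r) Hz ltac:(lra)). rewrite E in H0.
  assert (r*(y-1) <= r * (/r*(z-1))) by (apply Rmult_le_compat_l; lra).
  replace (r * (/r*(z-1))) with (z-1) in H1 by (field; lra). lra. Qed.
Lemma rpow_pos t q : 0 < t -> rpow t q = Rpower t q.
Proof. intros. unfold rpow. destruct (Req_EM_T t 0); [lra|auto]. Qed.

Lemma Rpower_pos x y : 0 < Rpower x y.
Proof. unfold Rpower; apply exp_pos. Qed.

Lemma tangent M t q : 0 < M -> 0 <= t -> 1 <= q ->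
  Rpower M q * (1 + q * (t/M - 1)) <= rpow t q.
Proof. intros HM Ht Hq. pose proof (Rpower_pos M q).
  destruct (Req_dec t 0) as [E|E].
  - subst. unfold rpow. destruct (Req_EM_T 0 0); [|congruence].
    unfold Rdiv; rewrite Rmult_0_l. nra.
  - rewrite rpow_pos by lra.
    replace t with (M * (t/M)) at 2 by (field; lra).
    rewrite <- Rpower_mult_distr.
    + apply Rmult_le_compat_l; [lra|]. apply bern_conv; auto.
      apply Rdiv_lt_0_compat; lra.
    + lra.
    + apply Rdiv_lt_0_compat; lra.
Qed.

Lemma sum_pow a b M q : 0 <= a -> 0 <= b -> 0 < M -> 2*M <= a + b -> 1 <= q ->
  2 * Rpower M q <= rpow a q + rpow b q.
Proof. intros. pose proof (tangent M a q H1 H H3). pose proof (tangent M b q H1 H0 H3).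
  pose proof (Rpower_pos M q).
  assert (2 <= a/M + b/M).
  { unfold Rdiv. rewrite <- Rmult_plus_distr_r.
    apply (Rmult_le_reg_r M); auto. rewrite Rmult_assoc, Rinv_l by lra. lra. }
  assert (0 <= Rpower M q * (q * (a/M + b/M - 2))).
  { apply Rmult_le_pos; [lra|]. apply Rmult_le_pos; lra. }
  nra.
Qed.

Lemma upper x q : 0 < x < 1 -> 1 <= q <= 2 ->
  Rpower (1+x) q + Rpower (1-x) q <= 2 + 2*(q-1)*x^2.
Proof. intros Hx Hq.
  assert (F : forall y, 0 < y -> Rpower y q = y * Rpower y (q-1)).
  { intros y Hy. replace q with (1 + (q-1)) at 1 by ring. rewrite Rpower_plus, Rpower_1; auto. }
  rewrite !F by lra.
  pose proof (bern_conc (1+x) (q-1) ltac:(lra) ltac:(lra)).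
  pose proof (bern_conc (1-x) (q-1) ltac:(lra) ltac:(lra)).
  assert ((1+x) * Rpower (1+x) (q-1) <= (1+x) * (1 + (q-1)*((1+x)-1))) by (apply Rmult_le_compat_l; lra).
  assert ((1-x) * Rpower (1-x) (q-1) <= (1-x) * (1 + (q-1)*((1-x)-1))) by (apply Rmult_le_compat_l; lra).
  nra.
Qed.
Theorem mainTheorem15 (X : Type) (d : X -> X -> R) (q : R) :
  is_metric d -> 1 <= q -> q_barycentric d q -> has_geodesic_segment d ->
  2 <= q.
Proof.
  intros [Dpos [Dsep [Dsym Dtri]]] Hq [beta [Hb [B [_ HB]]]] [a [b [f [Hab Hf]]]].
  destruct (Rle_or_lt 2 q) as [|Hq2]; auto. exfalso.
  set (c := / rpow beta q).
  assert (Hc : 0 < c) by (unfold c; rewrite rpow_pos by lra; apply Rinv_0_lt_compat, Rpower_pos).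
  set (L := (b - a)/2). set (m := (a+b)/2).
  set (y := Rmin c 1 / 2).
  assert (Hy : 0 < y < 1) by (unfold y; pose proof (Rmin_r c 1); assert (0 < Rmin c 1) by (apply Rmin_glb_lt; lra); lra).
  assert (Hyc : y < c) by (unfold y; pose proof (Rmin_l c 1); lra).
  set (t := Rpower y (/ (2 - q))).
  assert (Ht0 : 0 < t) by apply Rpower_pos.
  assert (Ht1 : t < 1).
  { unfold t, Rpower. rewrite <- exp_0. apply exp_increasing.
    assert (ln y < 0) by (rewrite <- ln_1; apply ln_increasing; lra).
    assert (0 < / (2-q)) by (apply Rinv_0_lt_compat; lra). nra. }
  assert (Hty : Rpower t (2 - q) = y).
  { unfold t. rewrite Rpower_mult, Rinv_l by lra. apply Rpower_1; lra. }
  set (k := L * t).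
  assert (HL : 0 < L) by (unfold L; lra).
  assert (Hk : 0 < k) by (unfold k; nra).
  assert (HkL : k < L) by (unfold k; nra).
  set (P := f (m - k)). set (P' := f (m + k)). set (XL := f a). set (XR := f b).
  assert (In1 : a <= m - k <= b) by (unfold m, L in *; lra).
  assert (In2 : a <= m + k <= b) by (unfold m, L in *; lra).
  assert (Ia : a <= a <= b) by lra. assert (Ib : a <= b <= b) by lra.
  assert (dPP : d P P' = 2*k) by (unfold P, P'; rewrite Hf by auto; rewrite Rabs_left; lra).
  assert (dPR : d XR P = L + k) by (unfold P, XR; rewrite Hf by auto; rewrite Rabs_right; unfold m, L in *; lra).
  assert (dP'R : d XR P' = L - k) by (unfold P', XR; rewrite Hf by auto; rewrite Rabs_right; unfold m, L in *; lra).
  assert (dPL : d XL P = L - k) by (unfold P, XL; rewrite Hf by auto; rewrite Rabs_left1; unfold m, L in *; lra).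
  assert (dP'L : d XL P' = L + k) by (unfold P', XL; rewrite Hf by auto; rewrite Rabs_left1; unfold m, L in *; lra).
  assert (dLR : d XL XR = 2*L) by (unfold XL, XR; rewrite Hf by auto; rewrite Rabs_left; unfold L; lra).
  assert (PneP' : P <> P') by (intro E; rewrite E in dPP; rewrite (proj2 (Dsep P' P') eq_refl) in dPP; lra).
  set (mu := fun z : X => if excluded_middle_informative (z = P) then 1/2
                   else if excluded_middle_informative (z = P') then 1/2 else 0).
  assert (muP : mu P = 1/2) by (unfold mu; destruct (excluded_middle_informative (P = P)); congruence).
  assert (muP' : mu P' = 1/2).
  { unfold mu; destruct (excluded_middle_informative (P' = P)); [congruence|].
    destruct (excluded_middle_informative (P' = P')); congruence. }
  assert (Hmu : fs_prob_on mu [P; P']).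
  { split; [|split; [|split]].
    - constructor. simpl. intros [E|[]]; congruence. constructor; [simpl; auto|constructor].
    - intros z Hz. unfold mu in Hz. destruct (excluded_middle_informative (z = P)); [left; auto|].
      destruct (excluded_middle_informative (z = P')); [right; left; auto|]. lra.
    - intros z. unfold mu. destruct (excluded_middle_informative (z = P)); [lra|].
      destruct (excluded_middle_informative (z = P')); lra.
    - simpl. rewrite muP, muP'. lra. }
  pose proof (HB mu [P;P'] XR Hmu) as HR.
  pose proof (HB mu [P;P'] XL Hmu) as HLf.
  simpl in HR, HLf. rewrite muP, muP' in HR, HLf. fold c in HR, HLf.
  rewrite dPR, dP'R in HR. rewrite dPL, dP'L in HLf.
  set (Bm := B mu) in *.
  assert (S1 : 2 * Rpower L q <= rpow (d Bm XR) q + rpow (d Bm XL) q).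
  { apply sum_pow; auto. pose proof (Dtri XL Bm XR). rewrite (Dsym XL Bm) in H. lra. }
  assert (S2 : 2 * Rpower k q <= rpow (d Bm P) q + rpow (d Bm P') q).
  { apply sum_pow; auto. pose proof (Dtri P Bm P'). rewrite (Dsym P Bm) in H. lra. }
  assert (U : rpow (L + k) q + rpow (L - k) q <= Rpower L q * (2 + 2 * t^2)).
  { rewrite !rpow_pos by lra.
    replace (L + k) with (L * (1 + t)) by (unfold k; ring).
    replace (L - k) with (L * (1 - t)) by (unfold k; ring).
    rewrite <- !Rpower_mult_distr by lra.
    pose proof (upper t q ltac:(lra) ltac:(lra)).
    pose proof (Rpower_pos L q).
    assert (2*(q-1)*t^2 <= 2 * t^2) by (assert (0 <= t^2) by nra; nra). nra. }
  assert (Key : c * Rpower k q <= Rpower L q * t^2).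
  { assert (0 <= c * (rpow (d Bm P) q + rpow (d Bm P') q - 2 * Rpower k q)) by (apply Rmult_le_pos; lra).
    nra. }
  unfold k in Key. rewrite <- Rpower_mult_distr in Key by lra.
  assert (T2 : t^2 = Rpower t q * y).
  { rewrite <- Hty, <- Rpower_plus. replace (q + (2-q)) with (INR 2) by (simpl; ring).
    rewrite Rpower_pow; auto. }
  rewrite T2 in Key. pose proof (Rpower_pos L q). pose proof (Rpower_pos t q).
  assert (c * (Rpower L q * Rpower t q) <= y * (Rpower L q * Rpower t q)) by nra.
  assert (0 < Rpower L q * Rpower t q) by nra.
  nra.
Qed.
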